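(* Let $k$ be a perfect field of characteristic $p>0$. Let $V$ be a $k[\mathbb Z/p\mathbb Z]$-module and $W\subset V$ a $k[\mathbb Z/p\mathbb Z]$-submodule such that $V/W$ is a free $k[\mathbb Z/p\mathbb Z]$-module. Then for every integer $n\ge2$, the quotient $V^{\otimes n}/W^{\otimes n}$ is a free $k[\mathbb Z/p\mathbb Z]$-module.
   Context: Tensor products are over $k$, and $\mathbb Z/p\mathbb Z$ acts on $V^{\otimes n}$ and $W^{\otimes n}\subset V^{\otimes n}$ diagonally. *)

(* Defs.v *)
From HB Require Import structures.
From mathcomp Require Import all_boot all_order all_algebra.
From mathcomp Require Import finmap.
From mathcomp.multinomials Require Import monalg.

Set Implicit Arguments.
Unset Strict Implicit.
Unset Printing Implicit Defensive.

Import GRing.Theory.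
Local Open Scope ring_scope.

(* A field k of characteristic p > 0 is perfect iff Frobenius is onto. *)
Definition perfect_char (k : fieldType) (p : nat) : Prop :=
  forall x : k, exists y : k, y ^+ p = x.

Section Tensor.
Variable k : fieldType.

(* k-vector spaces are modelled as k^(A) = {malg k[A]} (finitely supported
   functions A -> k, i.e. free k-modules with basis A). *)

(* pure tensor u (x) w in k^(A) (x) k^(C) = k^(A * C) *)
Definition tens2 (A C : choiceType) (u : {malg k[A]}) (w : {malg k[C]})
  : {malg k[(A * C)%type]} :=
  \sum_(a <- msupp u) \sum_(c <- msupp w) << u@_a * w@_c *g (a, c) >>.

Definition tmap2 (A A' C C' : choiceType)
  (f : {malg k[A]} -> {malg k[A']}) (h : {malg k[C]} -> {malg k[C']})
  (F : {malg k[(A * C)%type]}) : {malg k[(A' * C')%type]} :=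
  \sum_(x <- msupp F) F@_x *: tens2 (f << x.1 >>) (h << x.2 >>).

(* basis of V^{(x) n}, V = k^(B):  B^n built as ((unit * B) * B) ... *)
Fixpoint tpowB (B : choiceType) (n : nat) : choiceType :=
  if n is n'.+1 then (tpowB B n' * B)%type else unit.

Fixpoint tpow_map (B : choiceType) (n : nat) (g : {malg k[B]} -> {malg k[B]})
  : {malg k[tpowB B n]} -> {malg k[tpowB B n]} :=
  match n return {malg k[tpowB B n]} -> {malg k[tpowB B n]} with
  | 0 => id
  | n'.+1 => tmap2 (@tpow_map B n' g) g
  end.

(* W^{(x) n} as a subspace of V^{(x) n}: the span of the pure tensors
   w_1 (x) ... (x) w_n with all w_i in W *)
Fixpoint tpow_sub (B : choiceType) (n : nat) (W : {malg k[B]} -> Prop)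
  : {malg k[tpowB B n]} -> Prop :=
  match n return {malg k[tpowB B n]} -> Prop with
  | 0 => fun _ => True
  | n'.+1 => fun F =>
      exists s : seq ({malg k[tpowB B n']} * {malg k[B]}),
        (forall x, x \in s -> @tpow_sub B n' W x.1 /\ W x.2) /\
        F = \sum_(x <- s) tens2 x.1 x.2
  end.

(* k[Z/pZ]-linear combination sum_j r_j . x_j, where the group-algebra
   coefficient r_j = sum_(i < p) c_(j,i) sigma^i, sigma acting by g *)
Definition kG_comb (p : nat) (M : lmodType k) (g : M -> M) (J : choiceType)
  (x : J -> M) (c : {malg k[(J * 'I_p)%type]}) : M :=
  \sum_(ji <- msupp c) c@_ji *: iter (nat_of_ord ji.2) g (x ji.1).

(* M/N is a free k[Z/pZ]-module (Z/pZ generated by sigma acting by g):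
   there is a family (x_j) whose images in M/N form a k[Z/pZ]-basis. *)
Definition free_quot (p : nat) (M : lmodType k) (g : M -> M) (N : M -> Prop)
  : Prop :=
  exists (J : choiceType) (x : J -> M),
    (forall m : M, exists c, N (m - @kG_comb p M g J x c)) /\
    (forall c, N (@kG_comb p M g J x c) -> c = 0).

End Tensor.

(* Main.v *)
Require Import Defs.
From HB Require Import structures.
From mathcomp Require Import all_boot all_order all_algebra.
From mathcomp Require Import finmap.
From mathcomp.multinomials Require Import monalg.
From mathcomp Require classical_sets boolp.
From Stdlib Require Import ClassicalEpsilon.
Set Implicit Arguments.
Unset Strict Implicit.
Unset Printing Implicit Defensive.
Import GRing.Theory.
Local Open Scope ring_scope.
Section Lcomb.
Variable k : fieldType.

Definition linP (M N : lmodType k) (f : M -> N) :=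
  forall a u v, f (a *: u + v) = a *: f u + f v.

Definition subsp (M : lmodType k) (N : M -> Prop) :=
  N 0 /\ forall a u v, N u -> N v -> N (a *: u + v).

Definition lcomb (T : choiceType) (M : lmodType k) (f : T -> M) (c : {malg k[T]}) : M :=
  \sum_(t <- msupp c) c@_t *: f t.

Lemma linP0 (M N : lmodType k) (f : M -> N) : linP f -> f 0 = 0.
Proof.
move=> lf; have := lf 1 0 0; rewrite !scale1r addr0 => H.
by apply: (@addrI _ (f 0)); rewrite addr0 -H.
Qed.

Lemma linPD (M N : lmodType k) (f : M -> N) : linP f -> forall u v, f (u + v) = f u + f v.
Proof. by move=> lf u v; have := lf 1 u v; rewrite !scale1r. Qed.

Lemma linPZ (M N : lmodType k) (f : M -> N) : linP f -> forall a u, f (a *: u) = a *: f u.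
Proof. by move=> lf a u; rewrite -[a *: u]addr0 lf (linP0 lf) addr0. Qed.

Lemma linPN (M N : lmodType k) (f : M -> N) : linP f -> forall u, f (- u) = - f u.
Proof. by move=> lf u; rewrite -scaleN1r linPZ // scaleN1r. Qed.

Lemma linPB (M N : lmodType k) (f : M -> N) : linP f -> forall u v, f (u - v) = f u - f v.
Proof. by move=> lf u v; rewrite linPD // linPN. Qed.

Lemma linP_sum (M N : lmodType k) (f : M -> N) (I : Type) (s : seq I) (F : I -> M) :
  linP f -> f (\sum_(i <- s) F i) = \sum_(i <- s) f (F i).
Proof.
move=> lf; elim: s => [|i s IH]; first by rewrite !big_nil linP0.
by rewrite !big_cons linPD // IH.
Qed.

Lemma linP_comp (M N O : lmodType k) (f : M -> N) (f' : N -> O) :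
  linP f -> linP f' -> linP (f' \o f).
Proof. by move=> lf lf' a u v /=; rewrite lf lf'. Qed.

Lemma linP_iter (M : lmodType k) (f : M -> M) n : linP f -> linP (iter n f).
Proof. by move=> lf; elim: n => [|n IH] a u v //=; rewrite IH lf. Qed.

Lemma linP_id (M : lmodType k) : linP (@id M).
Proof. by []. Qed.

Lemma subsp0 (M : lmodType k) (N : M -> Prop) : subsp N -> N 0.
Proof. by case. Qed.

Lemma subspD (M : lmodType k) (N : M -> Prop) : subsp N -> forall u v, N u -> N v -> N (u + v).
Proof. by case=> _ H u v Nu Nv; have := H 1 u v Nu Nv; rewrite scale1r. Qed.

Lemma subspZ (M : lmodType k) (N : M -> Prop) : subsp N -> forall a u, N u -> N (a *: u).
Proof. by case=> H0 H a u Nu; rewrite -[a *: u]addr0; apply: H. Qed.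

Lemma subspN (M : lmodType k) (N : M -> Prop) : subsp N -> forall u, N u -> N (- u).
Proof. by move=> sN u Nu; rewrite -scaleN1r; apply: subspZ. Qed.

Lemma subspB (M : lmodType k) (N : M -> Prop) : subsp N -> forall u v, N u -> N v -> N (u - v).
Proof. by move=> sN u v Nu Nv; apply: subspD => //; apply: subspN. Qed.

Lemma subsp_sum (M : lmodType k) (N : M -> Prop) (I : eqType) (s : seq I) (F : I -> M) :
  subsp N -> (forall i, i \in s -> N (F i)) -> N (\sum_(i <- s) F i).
Proof.
move=> sN; elim: s => [|i s IH] H; first by rewrite big_nil; apply: subsp0.
rewrite big_cons; apply: subspD => //; first by apply: H; rewrite mem_head.
by apply: IH => j js; apply: H; rewrite in_cons js orbT.
Qed.

Section LcombT.
Variables (T : choiceType) (M : lmodType k).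
Implicit Types (f : T -> M) (c : {malg k[T]}).

Lemma lcombEw f c (d : {fset T}) : (msupp c `<=` d)%fset ->
  lcomb f c = \sum_(t <- d) c@_t *: f t.
Proof.
move=> sub; rewrite /lcomb; apply: big_fset_incl => // t _ tn.
by rewrite mcoeff_outdom // scale0r.
Qed.

Lemma lcomb_lin f : linP (lcomb f).
Proof.
move=> a c1 c2.
set d := (msupp c1 `|` msupp c2)%fset.
have s1 : (msupp c1 `<=` d)%fset by apply: fsubsetUl.
have s2 : (msupp c2 `<=` d)%fset by apply: fsubsetUr.
have s3 : (msupp (a *: c1 + c2) `<=` d)%fset.
  apply: fsubset_trans (msuppD_le _ _) _; apply: fsetSU.
  exact: msuppZ_le.
rewrite (lcombEw f s1) (lcombEw f s2) (lcombEw f s3) scaler_sumr -big_split /=.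
by apply: eq_bigr => t _; rewrite mcoeffD mcoeffZ scalerDl scalerA.
Qed.

Lemma lcomb0 f : lcomb f 0 = 0.
Proof. exact: linP0 (lcomb_lin f). Qed.

Lemma lcombU f r t : lcomb f << r *g t >> = r *: f t.
Proof.
rewrite (@lcombEw f _ [fset t]%fset) ?msuppU_le // big_seq_fset1.
by rewrite mcoeffUU.
Qed.

Lemma eq_lcomb_in f f' c : (forall t, t \in msupp c -> f t = f' t) ->
  lcomb f c = lcomb f' c.
Proof. by move=> H; apply: eq_big_seq => t /H ->. Qed.

Lemma lcomb_map (N : lmodType k) (phi : M -> N) f c : linP phi ->
  phi (lcomb f c) = lcomb (phi \o f) c.
Proof.
by move=> lp; rewrite /lcomb linP_sum //; apply: eq_bigr => t _; rewrite linPZ.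
Qed.

Lemma lcomb_closed (N : M -> Prop) f c : subsp N ->
  (forall t, t \in msupp c -> N (f t)) -> N (lcomb f c).
Proof.
move=> sN H; apply: subsp_sum => // t /H Nt; exact: subspZ.
Qed.

End LcombT.

Lemma monU (T : choiceType) (r : k) (t : T) : << r *g t >> = r *: (<< t >> : {malg k[T]}).
Proof.
apply/malgP => t'; rewrite mcoeffZ !mcoeffU.
by case: (t == t'); rewrite ?mulr1 ?mulr0.
Qed.

Lemma malg_lcomb (T : choiceType) (c : {malg k[T]}) : c = lcomb (fun t => << t >>) c.
Proof.
rewrite {1}(monalgE c) /lcomb; apply: eq_bigr => t _; exact: monU.
Qed.

Lemma lcomb_coef (T X : choiceType) (f : T -> {malg k[X]}) c x :
  (lcomb f c)@_x = \sum_(t <- msupp c) c@_t * (f t)@_x.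
Proof.
rewrite /lcomb raddf_sum; apply: eq_bigr => t _; exact: mcoeffZ.
Qed.

Lemma big_pick (T : choiceType) (R : zmodType) (s : {fset T}) (F : T -> R) t0 :
  \sum_(t <- s) F t *+ (t == t0) = F t0 *+ (t0 \in s).
Proof.
case: (boolP (t0 \in s)) => H.
  rewrite (big_fsetD1 t0) //= eqxx big1_fset ?addr0 // => t.
  by rewrite in_fsetD1 => /andP [/negbTE -> _].
rewrite big1_fset // => t ts _; case: eqP => // E.
by move: H; rewrite -E ts.
Qed.

Lemma sum_coef_pick (T : choiceType) (c : {malg k[T]}) (a : T -> k) t0 :
  (forall t, t \in msupp c -> a t = (t == t0)%:R) ->
  \sum_(t <- msupp c) c@_t * a t = c@_t0.
Proof.
move=> H; rewrite (eq_big_seq (fun t => c@_t *+ (t == t0))); last first.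
  by move=> t /H ->; rewrite mulr_natr.
rewrite big_pick; case: msuppP => //.
Qed.

End Lcomb.
Section Tens.
Variable k : fieldType.

Lemma tens2E (A C : choiceType) (u : {malg k[A]}) (w : {malg k[C]}) a c :
  (tens2 u w)@_(a, c) = u@_a * w@_c.
Proof.
rewrite /tens2 raddf_sum /=.
transitivity (\sum_(a' <- msupp u) (u@_a * w@_c) *+ (a' == a)).
  apply: eq_bigr => a' _; rewrite raddf_sum /=.
  case: (eqVneq a' a) => [->|ne]; rewrite ?mulr1n ?mulr0n.
    rewrite (eq_bigr (fun c' => (u@_a * w@_c') *+ (c' == c))); last first.
      by move=> c' _; rewrite mcoeffU xpair_eqE eqxx.
    by rewrite big_pick; case: (msuppP w c); rewrite ?mulr0 ?mulr1n.
  apply: big1 => c' _; by rewrite mcoeffU xpair_eqE (negbTE ne).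
by rewrite big_pick; case: (msuppP u a); rewrite ?mul0r ?mulr1n.
Qed.

Lemma tens2E' (A C : choiceType) (u : {malg k[A]}) (w : {malg k[C]}) x :
  (tens2 u w)@_x = u@_(x.1) * w@_(x.2).
Proof. by case: x => a c; rewrite tens2E. Qed.

Variables (A C : choiceType).
Implicit Types (u : {malg k[A]}) (w : {malg k[C]}).

Lemma tens2_linl w : linP (fun u => tens2 u w).
Proof.
move=> r u1 u2; apply/malgP => x.
by rewrite mcoeffD mcoeffZ !tens2E' mcoeffD mcoeffZ mulrDl mulrA.
Qed.

Lemma tens2_linr u : linP (@tens2 k A C u).
Proof.
move=> r w1 w2; apply/malgP => x.
by rewrite mcoeffD mcoeffZ !tens2E' mcoeffD mcoeffZ mulrDr mulrCA.
Qed.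

Lemma tens2_0l w : tens2 (0 : {malg k[A]}) w = 0.
Proof. exact: (linP0 (tens2_linl w)). Qed.

Lemma tens2_0r u : tens2 u (0 : {malg k[C]}) = 0.
Proof. exact: (linP0 (tens2_linr u)). Qed.

Lemma tens2U (a : A) (c : C) : tens2 (<< a >> : {malg k[A]}) (<< c >> : {malg k[C]}) = << (a, c) >>.
Proof.
apply/malgP => x; rewrite tens2E' !mcoeffU.
case: x => a' c' /=; rewrite xpair_eqE.
by case: (a == a'); case: (c == c'); rewrite /= ?mulr1 ?mulr0.
Qed.

Lemma tens_decomp (F : {malg k[(A * C)%type]}) :
  F = lcomb (fun x => tens2 (<< x.1 >> : {malg k[A]}) (<< x.2 >> : {malg k[C]})) F.
Proof.
rewrite {1}(malg_lcomb F); apply: eq_lcomb_in => x _.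
by case: x => a c; rewrite tens2U.
Qed.

Lemma tens2_lcomb u w :
  tens2 u w = lcomb (fun a => lcomb (fun c => tens2 (<< a >> : {malg k[A]}) (<< c >> : {malg k[C]})) w) u.
Proof.
rewrite {1}(malg_lcomb u) (lcomb_map _ _ (tens2_linl w)).
apply: eq_lcomb_in => a _ /=.
by rewrite {1}(malg_lcomb w) (lcomb_map _ _ (tens2_linr _)).
Qed.

End Tens.

Lemma tmap2_tens (k : fieldType) (A A' C C' : choiceType)
  (f : {malg k[A]} -> {malg k[A']}) (h : {malg k[C]} -> {malg k[C']}) u w :
  linP f -> linP h -> tmap2 f h (tens2 u w) = tens2 (f u) (h w).
Proof.
move=> lf lh.
have -> : tmap2 f h (tens2 u w) =
  lcomb (fun x => tens2 (f << x.1 >>) (h << x.2 >>)) (tens2 u w) by [].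
rewrite tens2_lcomb (lcomb_map _ _ (lcomb_lin _)).
rewrite {2}(malg_lcomb u) (lcomb_map _ _ lf) (lcomb_map _ _ (tens2_linl _)).
apply: eq_lcomb_in => a _ /=.
rewrite (lcomb_map _ _ (lcomb_lin _)).
rewrite {2}(malg_lcomb w) (lcomb_map _ _ lh) (lcomb_map _ _ (tens2_linr _)).
apply: eq_lcomb_in => c _ /=.
by rewrite tens2U lcombU scale1r.
Qed.

Lemma tmap2_lin (k : fieldType) (A A' C C' : choiceType)
  (f : {malg k[A]} -> {malg k[A']}) (h : {malg k[C]} -> {malg k[C']}) :
  linP (tmap2 f h).
Proof.
move=> r F1 F2.
have E : forall F, tmap2 f h F = lcomb (fun x => tens2 (f << x.1 >>) (h << x.2 >>)) F by [].
by rewrite !E lcomb_lin.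
Qed.
Section Indep.
Variable k : fieldType.

Lemma some_eq (S : eqType) (s s' : S) : (Some s' == Some s) = (s' == s).
Proof. by apply/eqP/eqP => [[]|->]. Qed.

Lemma tens_indep_r (A B S X : choiceType) (v : S -> {malg k[B]})
  (vfree : forall d, lcomb v d = 0 -> d = 0) (c : {malg k[X]})
  (sg : X -> option S) (u : X -> {malg k[A]}) :
  lcomb (fun x => tens2 (u x) (oapp v 0 (sg x))) c = 0 ->
  forall s, lcomb (fun x => (sg x == Some s)%:R *: u x) c = 0.
Proof.
move=> H s; apply/malgP => a; rewrite mcoeff0 lcomb_coef.
set d := lcomb (fun x => oapp (fun s' => (u x)@_a *: (<< s' >> : {malg k[S]})) 0 (sg x)) c.
have d0 : d = 0.
  apply: vfree; rewrite /d (lcomb_map _ _ (lcomb_lin v)).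
  apply/malgP => b; rewrite mcoeff0 lcomb_coef.
  have := congr1 (mcoeff (a, b)) H; rewrite mcoeff0 lcomb_coef => E; apply: (etrans _ E).
  apply: eq_bigr => x _ /=; rewrite tens2E; case: (sg x) => [s'|] /=.
    by rewrite (linPZ (lcomb_lin v)) lcombU scale1r mcoeffZ.
  by rewrite (linP0 (lcomb_lin v)) !mcoeff0 !mulr0.
have := congr1 (mcoeff s) d0; rewrite mcoeff0 /d lcomb_coef => E; apply: (etrans _ E).
apply: eq_bigr => x _; rewrite mcoeffZ; case: (sg x) => [s'|] /=.
  rewrite some_eq mcoeffZ mcoeffU eq_sym.
  by case: (s == s'); rewrite ?mul1r ?mulr1 ?mul0r ?mulr0.
by rewrite mcoeff0 mul0r.
Qed.

Lemma tens_indep_l (A B S X : choiceType) (u : S -> {malg k[A]})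
  (ufree : forall d, lcomb u d = 0 -> d = 0) (c : {malg k[X]})
  (sg : X -> option S) (v : X -> {malg k[B]}) :
  lcomb (fun x => tens2 (oapp u 0 (sg x)) (v x)) c = 0 ->
  forall s, lcomb (fun x => (sg x == Some s)%:R *: v x) c = 0.
Proof.
move=> H s; apply/malgP => b; rewrite mcoeff0 lcomb_coef.
set d := lcomb (fun x => oapp (fun s' => (v x)@_b *: (<< s' >> : {malg k[S]})) 0 (sg x)) c.
have d0 : d = 0.
  apply: ufree; rewrite /d (lcomb_map _ _ (lcomb_lin u)).
  apply/malgP => a; rewrite mcoeff0 lcomb_coef.
  have := congr1 (mcoeff (a, b)) H; rewrite mcoeff0 lcomb_coef => E; apply: (etrans _ E).
  apply: eq_bigr => x _ /=; rewrite tens2E; case: (sg x) => [s'|] /=.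
    by rewrite (linPZ (lcomb_lin u)) lcombU scale1r mcoeffZ [_ * (u _)@_a]mulrC.
  by rewrite (linP0 (lcomb_lin u)) !mcoeff0 mul0r !mulr0.
have := congr1 (mcoeff s) d0; rewrite mcoeff0 /d lcomb_coef => E; apply: (etrans _ E).
apply: eq_bigr => x _; rewrite mcoeffZ; case: (sg x) => [s'|] /=.
  rewrite some_eq mcoeffZ mcoeffU eq_sym.
  by case: (s == s'); rewrite ?mul1r ?mulr1 ?mul0r ?mulr0.
by rewrite mcoeff0 mul0r.
Qed.

Lemma proj_exists (M : lmodType k) (T : choiceType) (f : T -> M) (N : M -> Prop) :
  subsp N -> (forall m, exists c, N (m - lcomb f c)) ->
  (forall c, N (lcomb f c) -> c = 0) ->
  exists P : M -> M, [/\ linP P, forall n, N n -> P n = 0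
                       & forall c, P (lcomb f c) = lcomb f c].
Proof.
move=> sN ex un.
pose ch m := proj1_sig (constructive_indefinite_description _ (ex m)).
have chP m : N (m - lcomb f (ch m)).
  exact: (proj2_sig (constructive_indefinite_description _ (ex m))).
have uniq m c : N (m - lcomb f c) -> ch m = c.
  move=> Nc; apply/eqP; rewrite -subr_eq0; apply/eqP/un.
  rewrite (linPB (lcomb_lin f)).
  have := subspB sN Nc (chP m).
  by rewrite opprB addrC -addrA addKr.
exists (fun m => lcomb f (ch m)); split.
- move=> a u v; rewrite -(lcomb_lin f); congr lcomb; apply: uniq.
  rewrite (lcomb_lin f).
  have := subspD sN (subspZ sN a (chP u)) (chP v).
  by rewrite opprD addrACA -scalerBr.
- by move=> n Nn; rewrite (uniq n 0) (linP0 (lcomb_lin f)) // subr0.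
- by move=> c; rewrite (uniq _ c) // subrr; apply: subsp0.
Qed.

End Indep.
Section Basis.
Variable k : fieldType.

Lemma basis_exists (M : lmodType k) (W : M -> Prop) : subsp W ->
  exists (K : choiceType) (w : K -> M),
    [/\ forall b, W (w b), forall d, lcomb w d = 0 -> d = 0
      & forall v, W v -> exists d, v = lcomb w d].
Proof.
move=> sW.
pose indep (S : M -> Prop) := forall d : {malg k[M]},
  (forall m, m \in msupp d -> S m) -> lcomb (fun m : M => m) d = 0 -> d = 0.
pose P := fun S : classical_sets.set M => (forall m, S m -> W m) /\ indep S.
have [A [[AW Aind] Amax]] : exists A, P A /\
    forall B, classical_sets.proper A B -> ~ P B.
  apply: classical_sets.Zorn_bigcup => F FP Ftot; split.
    by move=> m [X FX Xm]; have [H _] := FP X FX; apply: H.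
  move=> d dsub d0.
  have key : forall s : seq M, (forall m, m \in s -> classical_sets.bigcup F id m) ->
      s = [::] \/ exists X, F X /\ forall m, m \in s -> X m.
    elim => [|m s IH] H; first by left.
    right; have [X0 FX0 X0m] := H m (mem_head _ _).
    have Hs : forall m', m' \in s -> classical_sets.bigcup F id m'.
      by move=> m' ms; apply: H; rewrite in_cons ms orbT.
    case: (IH Hs) => [->|[X [FX Xs]]].
      by exists X0; split => // m'; rewrite inE => /eqP ->.
    have [sub|sub] := Ftot X0 X FX0 FX.
      exists X; split => // m'; rewrite in_cons => /orP [/eqP ->|]; last exact: Xs.
      exact: sub.
    exists X0; split => // m'; rewrite in_cons => /orP [/eqP ->|/Xs] //.
    exact: sub.
  have [E|[X [FX Xs]]] := key (msupp d) dsub.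
    apply/malgP => m; rewrite mcoeff0; apply: mcoeff_outdom.
    by apply/negP => md; have : m \in (msupp d : seq M) := md; rewrite E.
  by have [_ Xind] := FP X FX; apply: Xind.
have span : forall v, W v -> exists d : {malg k[M]},
    (forall m, m \in msupp d -> A m) /\ v = lcomb (fun m : M => m) d.
  move=> v Wv; case: (classic (exists d : {malg k[M]},
    (forall m, m \in msupp d -> A m) /\ v = lcomb (fun m : M => m) d)) => // nE.
  exfalso.
  have vA : ~ A v.
    move=> Av; apply: nE; exists << v >>; split.
      move=> m; move/(fsubsetP msuppU_le); rewrite inE => /eqP -> //.
    by rewrite lcombU scale1r.
  apply: (Amax (fun m => A m \/ m = v)); first split.
  - by move=> m Am; left.
  - by move=> H; apply: vA; apply: H; right.
  split.
    by move=> m [Am|->] //; apply: AW.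
  move=> d dsub d0.
  case: (eqVneq d@_v 0) => dv.
    apply: Aind => // m md; case: (dsub m md) => // mv.
    by move: md; rewrite mv -mcoeff_neq0 dv eqxx.
  exfalso; apply: nE; exists (- (d@_v)^-1 *: (d - d@_v *: << v >>)); split.
    move=> m; rewrite -mcoeff_neq0 mcoeffZ mcoeffB mcoeffZ mcoeffU.
    case: (eqVneq v m) => [<-|vm]; first by rewrite mulr1n mulr1 subrr mulr0 eqxx.
    rewrite mulr0n mulr0 subr0 mulf_eq0 negb_or => /andP [_ dm].
    by case: (dsub m); rewrite -?mcoeff_neq0 // => mv; move: vm; rewrite mv eqxx.
  rewrite (linPZ (lcomb_lin _)) (linPB (lcomb_lin _)) (linPZ (lcomb_lin _)) lcombU.
  by rewrite scale1r d0 sub0r scalerN scaleNr opprK scalerA mulVf // scale1r.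
exists {m : M | boolp.asbool (A m)}, (fun t => val t); split.
- by move=> [m /= /boolp.asboolP Am]; apply: AW.
- move=> d Hd.
  set d' := lcomb (fun t => (<< val t >> : {malg k[M]})) d.
  have d'0 : d' = 0.
    apply: Aind.
      move=> m; rewrite -mcoeff_neq0; case: (classic (A m)) => // nAm.
      rewrite /d' lcomb_coef big1_seq ?eqxx // => t _.
      rewrite mcoeffU; case: eqP; rewrite ?mulr0n ?mulr0 // => E.
      by move: (valP t); rewrite E => /boolp.asboolP.
    rewrite /d' (lcomb_map _ _ (lcomb_lin _)) -Hd; apply: eq_lcomb_in => t _ /=.
    by rewrite lcombU scale1r.
  apply/malgP => t; rewrite mcoeff0.
  have := congr1 (mcoeff (val t)) d'0; rewrite mcoeff0 /d' lcomb_coef => <-.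
  symmetry; apply: sum_coef_pick => t' _; rewrite mcoeffU (inj_eq val_inj).
  by [].
- move=> v /span [d [dA vd]].
  exists (lcomb (fun m => oapp (fun t => (<< t >> : {malg k[{m : M | boolp.asbool (A m)}]})) 0 (insub m)) d).
  rewrite (lcomb_map _ _ (lcomb_lin _)) vd; apply: eq_lcomb_in => m md /=.
  case: insubP => [t _ <-|]; first by rewrite lcombU scale1r.
  by move=> /negP; case; apply/boolp.asboolP; apply: dA.
Qed.

End Basis.
Lemma kGE (k : fieldType) (p : nat) (M : lmodType k) (g : M -> M) (J : choiceType)
  (x : J -> M) c :
  @kG_comb k p M g J x c = lcomb (fun ji : J * 'I_p => iter ji.2 g (x ji.1)) c.
Proof. by []. Qed.

Definition span2 (k : fieldType) (A B : choiceType) (N : {malg k[A]} -> Prop)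
  (W : {malg k[B]} -> Prop) (F : {malg k[(A * B)%type]}) : Prop :=
  exists s : seq ({malg k[A]} * {malg k[B]}),
    (forall x, x \in s -> N x.1 /\ W x.2) /\ F = \sum_(x <- s) tens2 x.1 x.2.

Lemma tpow_subS (k : fieldType) (B : choiceType) n (W : {malg k[B]} -> Prop) :
  @tpow_sub k B n.+1 W = span2 (@tpow_sub k B n W) W.
Proof. by []. Qed.

Lemma tpow_mapS (k : fieldType) (B : choiceType) n (g : {malg k[B]} -> {malg k[B]}) :
  @tpow_map k B n.+1 g = tmap2 (@tpow_map k B n g) g.
Proof. by []. Qed.

Lemma iter_stable (M : Type) (N : M -> Prop) (f : M -> M) n :
  (forall m, N m -> N (f m)) -> forall m, N m -> N (iter n f m).
Proof. by move=> H; elim: n => //= n IH m /IH /H. Qed.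

Section Span2.
Variables (k : fieldType) (A B : choiceType).
Variables (N : {malg k[A]} -> Prop) (W : {malg k[B]} -> Prop).

Lemma span2_sub : subsp N -> subsp (span2 N W).
Proof.
move=> sN; split.
  by exists [::]; split; [move=> x; rewrite in_nil | rewrite big_nil].
move=> a F1 F2 [s1 [H1 ->]] [s2 [H2 ->]].
exists (map (fun x => (a *: x.1, x.2)) s1 ++ s2); split.
  move=> x; rewrite mem_cat => /orP [/mapP [y ys ->]|/H2 //] /=.
  by have [Ny Wy] := H1 y ys; split => //; apply: subspZ.
rewrite big_cat big_map /= scaler_sumr; congr (_ + _).
by apply: eq_bigr => x _; rewrite (linPZ (tens2_linl _)).
Qed.

Lemma span2_tens u v : N u -> W v -> span2 N W (tens2 u v).
Proof.
by move=> Nu Wv; exists [:: (u, v)]; split; [move=> x; rewrite inE => /eqP -> | rewrite big_seq1].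
Qed.

Lemma span2_map (A' B' : choiceType) (f : {malg k[A]} -> {malg k[A']})
  (f' : {malg k[B]} -> {malg k[B']}) F : linP f -> linP f' ->
  span2 N W F -> exists s : seq ({malg k[A]} * {malg k[B]}),
    (forall x, x \in s -> N x.1 /\ W x.2) /\
    tmap2 f f' F = \sum_(x <- s) tens2 (f x.1) (f' x.2).
Proof.
move=> lf lf' [s [Hs ->]]; exists s; split => //.
rewrite (linP_sum _ _ (tmap2_lin f f')); apply: eq_bigr => x _.
exact: tmap2_tens.
Qed.

Lemma span2_kill_r (A' B' : choiceType) (f : {malg k[A]} -> {malg k[A']})
  (f' : {malg k[B]} -> {malg k[B']}) F : linP f -> linP f' ->
  (forall w, W w -> f' w = 0) -> span2 N W F -> tmap2 f f' F = 0.
Proof.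
move=> lf lf' H /(span2_map lf lf') [s [Hs ->]].
apply: big1_seq => x /Hs [_ /H ->]; exact: tens2_0r.
Qed.

Lemma span2_kill_l (A' B' : choiceType) (f : {malg k[A]} -> {malg k[A']})
  (f' : {malg k[B]} -> {malg k[B']}) F : linP f -> linP f' ->
  (forall n, N n -> f n = 0) -> span2 N W F -> tmap2 f f' F = 0.
Proof.
move=> lf lf' H /(span2_map lf lf') [s [Hs ->]].
apply: big1_seq => x /Hs [/H -> _]; exact: tens2_0l.
Qed.

Lemma span2_stable (f : {malg k[A]} -> {malg k[A]})
  (f' : {malg k[B]} -> {malg k[B]}) F : linP f -> linP f' ->
  (forall n, N n -> N (f n)) -> (forall w, W w -> W (f' w)) ->
  span2 N W F -> span2 N W (tmap2 f f' F).
Proof.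
move=> lf lf' Hf Hf' /(span2_map lf lf') [s [Hs ->]].
exists (map (fun x => (f x.1, f' x.2)) s); split; last by rewrite big_map.
by move=> x /mapP [y /Hs [Ny Wy] ->]; split; [apply: Hf | apply: Hf'].
Qed.

End Span2.

Lemma iter_tmap2 (k : fieldType) (A B : choiceType) (h : {malg k[A]} -> {malg k[A]})
  (g : {malg k[B]} -> {malg k[B]}) l u v : linP h -> linP g ->
  iter l (tmap2 h g) (tens2 u v) = tens2 (iter l h u) (iter l g v).
Proof.
move=> lh lg; elim: l => //= l ->; exact: tmap2_tens.
Qed.

Lemma tmap2_p (k : fieldType) (A B : choiceType) (h : {malg k[A]} -> {malg k[A]})
  (g : {malg k[B]} -> {malg k[B]}) p : linP h -> linP g ->
  (forall m, iter p h m = m) -> (forall v, iter p g v = v) ->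
  forall F, iter p (tmap2 h g) F = F.
Proof.
move=> lh lg hp gp F.
rewrite {1}(tens_decomp F) (lcomb_map _ _ (linP_iter p (tmap2_lin h g))).
rewrite {2}(tens_decomp F); apply: eq_lcomb_in => x _ /=.
by rewrite iter_tmap2 // hp gp.
Qed.
Lemma inl_eq (T1 T2 : eqType) (x y : T1) : (@inl T1 T2 x == inl y) = (x == y).
Proof. by apply/eqP/eqP => [[]|->]. Qed.
Lemma inr_eq (T1 T2 : eqType) (x y : T2) : (@inr T1 T2 x == inr y) = (x == y).
Proof. by apply/eqP/eqP => [[]|->]. Qed.
Lemma inlr_eq (T1 T2 : eqType) (x : T1) (y : T2) : (inl x == inr y) = false.
Proof. by apply/eqP. Qed.
Lemma inrl_eq (T1 T2 : eqType) (x : T1) (y : T2) : (inr y == inl x) = false.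
Proof. by apply/eqP. Qed.

Section Step.
Variables (k : fieldType) (p : nat) (A B : choiceType).
Variables (h : {malg k[A]} -> {malg k[A]}) (g : {malg k[B]} -> {malg k[B]}).
Variables (N : {malg k[A]} -> Prop) (W : {malg k[B]} -> Prop).
Hypotheses (hl : linP h) (gl : linP g).
Hypotheses (hp : forall m, iter p h m = m) (gp : forall v, iter p g v = v).
Hypotheses (sN : subsp N) (sW : subsp W).
Hypotheses (Nh : forall m, N m -> N (h m)) (Wg : forall v, W v -> W (g v)).

Lemma iter_inv (M : Type) (f : M -> M) (i : 'I_p) m :
  (forall m, iter p f m = m) -> iter i f (iter (p - i) f m) = m.
Proof. by move=> fp; rewrite -iterD subnKC ?fp // ltnW. Qed.

Lemma iter_inv' (M : Type) (f : M -> M) (i : 'I_p) m :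
  (forall m, iter p f m = m) -> iter (p - i) f (iter i f m) = m.
Proof. by move=> fp; rewrite -iterD subnK ?fp // ltnW. Qed.

Lemma step : free_quot p h N -> free_quot p g W ->
  free_quot p (tmap2 h g) (span2 N W).
Proof.
move=> [I [y [yS yI]]] [J [x [xS xI]]].
have [K [w [wW wfree wspan]]] := basis_exists sW.
set tau := tmap2 h g.
have taul : linP tau := tmap2_lin h g.
have tauit l u v : iter l tau (tens2 u v) = tens2 (iter l h u) (iter l g v).
  exact: iter_tmap2.
pose fx := fun ji : J * 'I_p => iter ji.2 g (x ji.1).
pose fy := fun il : I * 'I_p => iter il.2 h (y il.1).
have xS' : forall v, exists c, W (v - lcomb fx c) by exact: xS.
have xI' : forall c, W (lcomb fx c) -> c = 0 by exact: xI.
have yS' : forall m, exists c, N (m - lcomb fy c) by exact: yS.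
have yI' : forall c, N (lcomb fy c) -> c = 0 by exact: yI.
have [PF [PFl PFW PFx]] := proj_exists sW xS' xI'.
have [PC [PCl PCN PCy]] := proj_exists sN yS' yI'.
have sS2 := span2_sub W sN.
pose z := fun s : ((A * J) + (I * K))%type =>
  match s with inl (a, j) => tens2 (<< a >> : {malg k[A]}) (x j)
             | inr (i, b) => tens2 (y i) (w b) end.
exists ((A * J) + (I * K))%type, z; split.
  pose S := fun T => exists c, span2 N W (T - @kG_comb k p _ tau _ z c).
  have sS : subsp S.
    split.
      exists 0; rewrite kGE (linP0 (lcomb_lin _)) subr0; exact: subsp0.
    move=> r u v [cu Hu] [cv Hv]; exists (r *: cu + cv).
    rewrite kGE lcomb_lin -!kGE.
    have := subspD sS2 (subspZ sS2 r Hu) Hv.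
    by rewrite opprD addrACA -scalerBr.
  have Sspan : forall T, span2 N W T -> S T.
    by move=> T HT; exists 0; rewrite kGE (linP0 (lcomb_lin _)) subr0.
  have Sz : forall s (l : 'I_p), S (iter l tau (z s)).
    move=> s l; exists << (s, l) >>; rewrite kGE lcombU scale1r subrr.
    exact: subsp0.
  have StW : forall u w0, W w0 -> S (tens2 u w0).
    move=> u w0 Ww0; have [cu Hu] := yS' u.
    have -> : tens2 u w0 = tens2 (u - lcomb fy cu) w0 + tens2 (lcomb fy cu) w0.
      by rewrite -(linPD (tens2_linl w0)) subrK.
    apply: (subspD sS); first by apply: Sspan; apply: span2_tens.
    rewrite (lcomb_map _ _ (tens2_linl w0)); apply: (lcomb_closed sS) => -[i l] _ /=.
    rewrite /fy /= -(iter_inv l w0 gp).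
    have [d ->] := wspan _ (iter_stable (p - l) Wg Ww0).
    rewrite (lcomb_map _ _ (linP_iter l gl)) (lcomb_map _ _ (tens2_linr _)).
    apply: (lcomb_closed sS) => b _ /=.
    by have := Sz (inr (i, b)) l; rewrite /= tauit.
  have Stens : forall u v, S (tens2 u v).
    move=> u v; have [cv Hv] := xS' v.
    have -> : tens2 u v = tens2 u (v - lcomb fx cv) + tens2 u (lcomb fx cv).
      by rewrite -(linPD (tens2_linr u)) subrK.
    apply: (subspD sS); first exact: StW.
    rewrite (lcomb_map _ _ (tens2_linr u)); apply: (lcomb_closed sS) => -[j i] _ /=.
    rewrite /fx /= -(iter_inv i u hp).
    rewrite (malg_lcomb (iter (p - i) h u)).
    rewrite (lcomb_map _ _ (linP_iter i hl)) (lcomb_map _ _ (tens2_linl _)).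
    apply: (lcomb_closed sS) => a _ /=.
    by have := Sz (inl (a, j)) i; rewrite /= tauit.
  move=> T; suff ST : S T by []; rewrite (tens_decomp T).
  apply: (lcomb_closed sS) => -[a b] _ /=; exact: Stens.

move=> c Hc; rewrite kGE in Hc.
set X := lcomb _ c in Hc.
have fxfree : forall d, lcomb fx d = 0 -> d = 0.
  by move=> d H0; apply: xI'; rewrite H0; exact: (subsp0 sW).
have fyfree : forall d, lcomb fy d = 0 -> d = 0.
  by move=> d H0; apply: yI'; rewrite H0; exact: (subsp0 sN).
have H1 : tmap2 id PF X = 0 := span2_kill_r (@linP_id _ _) PFl PFW Hc.
rewrite /X (lcomb_map _ _ (tmap2_lin _ _)) in H1.
pose sg1 := fun t : ((A * J) + (I * K)) * 'I_p =>
  match t.1 with inl (a, j) => Some (j, t.2) | inr _ => None end.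
pose u1 := fun t : ((A * J) + (I * K)) * 'I_p =>
  match t.1 with inl (a, j) => iter t.2 h (<< a >> : {malg k[A]}) | inr _ => 0 end.
have H1' : lcomb (fun t => tens2 (u1 t) (oapp fx 0 (sg1 t))) c = 0.
  rewrite -H1; apply: eq_lcomb_in => -[[[a j]|[i b]] l] _ /=.
    rewrite tauit tmap2_tens //.
    have E := PFx << (j, l) >>; rewrite lcombU scale1r /fx /= in E.
    by rewrite E.
  rewrite tauit tmap2_tens // PFW ?tens2_0r ?tens2_0l //.
  exact: (iter_stable l Wg (wW b)).
have H2 := tens_indep_r fxfree H1'.
have c1 : forall a j (i : 'I_p), c@_(inl (a, j), i) = 0.
  move=> a j i.
  have E := H2 (j, i).
  pose u0 := fun t : ((A * J) + (I * K)) * 'I_p =>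
    match t.1 with inl (a, _) => (<< a >> : {malg k[A]}) | inr _ => 0 end.
  have E' : lcomb (fun t => (sg1 t == Some (j, i))%:R *: u0 t) c = 0.
    have : iter i h (lcomb (fun t => (sg1 t == Some (j, i))%:R *: u0 t) c) = 0.
      rewrite (lcomb_map _ _ (linP_iter i hl)) -E.
      apply: eq_lcomb_in => -[[[a' j']|[i' b]] l] _ /=.
        rewrite (linPZ (linP_iter _ hl)) some_eq.
        case: (eqVneq l i) => [->|ne] //.
        by rewrite xpair_eqE (negbTE ne) andbF !scale0r.
      by rewrite !scaler0 (linP0 (linP_iter _ hl)).
    move=> /(congr1 (iter (p - i) h)); rewrite iter_inv' //.
    by rewrite (linP0 (linP_iter _ hl)).
  have := congr1 (mcoeff a) E'; rewrite mcoeff0 lcomb_coef => E2.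
  apply: etrans _ E2; symmetry; apply: sum_coef_pick.
  move=> -[[[a' j']|[i' b]] l] _ /=; rewrite mcoeffZ.
    rewrite some_eq mcoeffU !xpair_eqE inl_eq xpair_eqE.
    by case: (a' == a); case: (j' == j); case: (l == i); rewrite /= ?mulr1 ?mulr0.
  by rewrite mcoeff0 mulr0 ?xpair_eqE ?inrl_eq.
have cinr : forall t, t \in msupp c -> exists i' b, t.1 = inr (i', b).
  move=> -[[[a j]|[i b]] l] tc; last by exists i, b.
  by move: tc; rewrite -mcoeff_neq0 c1 eqxx.
have H3 : tmap2 PC id X = 0 := span2_kill_l PCl (@linP_id _ _) PCN Hc.
rewrite /X (lcomb_map _ _ (tmap2_lin _ _)) in H3.
pose sg2 := fun t : ((A * J) + (I * K)) * 'I_p =>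
  match t.1 with inr (i', _) => Some (i', t.2) | inl _ => None end.
pose v2 := fun t : ((A * J) + (I * K)) * 'I_p =>
  match t.1 with inr (_, b) => iter t.2 g (w b) | inl _ => 0 end.
have H3' : lcomb (fun t => tens2 (oapp fy 0 (sg2 t)) (v2 t)) c = 0.
  rewrite -H3; apply: eq_lcomb_in => t tc; have [i' [b E]] := cinr t tc.
  case: t tc E => -[[a j]|[i'' b']] l tc //= [-> ->].
  rewrite tauit tmap2_tens //.
  have E := PCy << (i', l) >>; rewrite lcombU scale1r /fy /= in E.
  by rewrite E.
have H4 := tens_indep_l fyfree H3'.
have c2 : forall i' b (l : 'I_p), c@_(inr (i', b), l) = 0.
  move=> i' b l.
  pose w0 := fun t : ((A * J) + (I * K)) * 'I_p =>
    match t.1 with inr (_, b) => w b | inl _ => 0 end.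
  have E := H4 (i', l).
  have E' : lcomb (fun t => (sg2 t == Some (i', l))%:R *: w0 t) c = 0.
    have : iter l g (lcomb (fun t => (sg2 t == Some (i', l))%:R *: w0 t) c) = 0.
      rewrite (lcomb_map _ _ (linP_iter l gl)) -E.
      apply: eq_lcomb_in => -[[[a j]|[i'' b']] l'] _ /=.
        by rewrite !scaler0 (linP0 (linP_iter _ gl)).
      rewrite (linPZ (linP_iter _ gl)) some_eq.
      case: (eqVneq l' l) => [->|ne] //.
      by rewrite xpair_eqE (negbTE ne) andbF !scale0r.
    move=> /(congr1 (iter (p - l) g)); rewrite iter_inv' //.
    by rewrite (linP0 (linP_iter _ gl)).
  pose d := lcomb (fun t : ((A * J) + (I * K)) * 'I_p =>
    (sg2 t == Some (i', l))%:R *: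
      match t.1 with inr (_, b) => (<< b >> : {malg k[K]}) | inl _ => 0 end) c.
  have d0 : d = 0.
    apply: wfree; rewrite /d (lcomb_map _ _ (lcomb_lin w)) -E'.
    apply: eq_lcomb_in => -[[[a j]|[i'' b']] l'] _ /=.
      by rewrite !scaler0 (linP0 (lcomb_lin w)).
    by rewrite (linPZ (lcomb_lin w)) lcombU scale1r.
  have := congr1 (mcoeff b) d0; rewrite mcoeff0 /d lcomb_coef => E2.
  apply: etrans _ E2; symmetry; apply: sum_coef_pick.
  move=> -[[[a j]|[i'' b']] l'] _ /=; rewrite mcoeffZ.
    by rewrite mcoeff0 mulr0 ?xpair_eqE ?inlr_eq.
  rewrite some_eq mcoeffU !xpair_eqE inr_eq xpair_eqE.
  by case: (b' == b); case: (i'' == i'); case: (l' == l); rewrite /= ?mulr1 ?mulr0.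
apply/malgP => -[[[a j]|[i' b]] l]; rewrite mcoeff0; [exact: c1 | exact: c2].
Qed.

End Step.

Theorem lemma2p8 (k : fieldType) (p : nat)
  (charp : p \in [pchar k]) (perf : perfect_char k p)
  (B : choiceType) (g : {linear {malg k[B]} -> {malg k[B]}})
  (g_order : forall v, iter p g v = v)
  (W : {malg k[B]} -> Prop)
  (W0 : W 0)
  (W_lin : forall (a : k) u v, W u -> W v -> W (a *: u + v))
  (W_stable : forall w, W w -> W (g w))
  (free_VW : free_quot p g W) :
  forall n : nat, (2 <= n)%N -> free_quot p (@tpow_map k B n g) (@tpow_sub k B n W).
Proof.
have gl : linP g by move=> a u v; rewrite linearP.
have sW : subsp W by split.
suff H : forall n, [/\ linP (@tpow_map k B n g),
    forall F, iter p (@tpow_map k B n g) F = F,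
    subsp (@tpow_sub k B n W),
    forall F, @tpow_sub k B n W F -> @tpow_sub k B n W (@tpow_map k B n g F)
  & free_quot p (@tpow_map k B n g) (@tpow_sub k B n W)].
  by move=> n _; case: (H n).
elim => [|n [hl hp sN Nh fN]].
  split => //.
  - move=> F /=; clear; elim: p => //= q ->.
  - exists void, (fun v : void => match v with end); split.
      by move=> m; exists 0.
    by move=> c _; apply/malgP => -[[]].
rewrite tpow_mapS tpow_subS; split.
- exact: tmap2_lin.
- exact: tmap2_p.
- exact: span2_sub.
- by move=> F; apply: span2_stable.
- exact: step.
Qed.
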